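(* Let $A$ be a finitely generated algebra over $B=\bigoplus_{s=1}^K\Bbbk e_s$, let $\alpha\in\mathbb N^K$, $N=\sum_s\alpha_s$, $R=\mathcal O(\operatorname{Rep}(A,\alpha))$, and let $Q\in(D_BA)_n$ with associated differential $n$-bracket $\{\!\{-,\ldots,-\}\!\}=\{\!\{-,\ldots,-\}\!\}_Q$. For $x=x^1\otimes\cdots\otimes x^n\in A^{\otimes n}$ set $x_{(u_1v_1,\ldots,u_nv_n)}=x^1_{u_1v_1}\cdots x^n_{u_nv_n}\in R$ (extended linearly). Let $S_{n-1}$ act on $\{2,\ldots,n\}$, extended by $\tilde\sigma(1)=1$. Then for all $a^1,\ldots,a^n\in A$ and indices $u_q,v_q\in\{1,\ldots,N\}$, $$\operatorname{tr}\mathcal X(Q)\big(a^1_{u_1v_1},\ldots,a^n_{u_nv_n}\big)=\sum_{\tilde\sigma\in S_{n-1}}\epsilon(\tilde\sigma)\,\{\!\{a^1,a^{\tilde\sigma(2)},\ldots,a^{\tilde\sigma(n)}\}\!\}_{\tilde\sigma(u,v)},$$ where $\tilde\sigma(u,v)=(u_{\tilde\sigma(n)}v_1,\,u_1v_{\tilde\sigma(2)},\,u_{\tilde\sigma(2)}v_{\tilde\sigma(3)},\ldots,u_{\tilde\sigma(n-1)}v_{\tilde\sigma(n)})$ and $\epsilon(\tilde\sigma)$ is the sign of $\tilde\sigma$.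
   Context: $\Bbbk$ field of characteristic $0$, $\otimes=\otimes_\Bbbk$, $e_se_t=\delta_{st}e_s$, $\sum e_s=1$. Representation space: $R$ is the commutative $\Bbbk$-algebra generated by symbols $a_{ij}$ ($a\in A$, $1\le i,j\le N$) with $(a+b)_{ij}=a_{ij}+b_{ij}$, $(ab)_{ij}=\sum_ka_{ik}b_{kj}$, and $(e_s)_{ij}=\delta_{ij}$ if $\alpha_1+\cdots+\alpha_{s-1}<i,j\le\alpha_1+\cdots+\alpha_s$, $0$ otherwise. $D_{A/B}=\operatorname{Der}_B(A,A\otimes A)$ for the outer structure $x(d'\otimes d'')y=xd'\otimes d''y$, with bimodule structure $(b\delta c)(a)=\delta(a)'c\otimes b\delta(a)''$; $D_BA=T_AD_{A/B}$. For $\delta\in D_{A/B}$, $\delta_{ij}\in\operatorname{Der}(R)$ is defined by $\delta_{ij}(b_{kl})=\delta(b)'_{kj}\delta(b)''_{il}$, and $\mathcal X(\delta)$ is the matrix $(\delta_{ij})$; for $Q=\delta_1\cdots\delta_n$, $\mathcal X(Q)=\mathcal X(\delta_1)\cdots\mathcal X(\delta_n)$ (matrix product with entries multiplied by $\wedge$ in $\bigwedge^n_R\operatorname{Der}(R)$), $\operatorname{tr}\mathcal X(Q)=\sum_i(\mathcal X(Q))_{ii}$, extended linearly. Polyvector fields are evaluated by $(\xi_1\wedge\cdots\wedge\xi_n)(f_1,\ldots,f_n)=\sum_{\sigma\in S_n}\epsilon(\sigma)\xi_1(f_{\sigma(1)})\cdots\xi_n(f_{\sigma(n)})$. With $\tau_\sigma(a_1\otimes\cdots\otimes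 a_n)=a_{\sigma^{-1}(1)}\otimes\cdots\otimes a_{\sigma^{-1}(n)}$, for $Q=\delta_1\cdots\delta_n$ the $n$-bracket is $\{\!\{-,\ldots,-\}\!\}_Q=\sum_{i=0}^{n-1}(-1)^{(n-1)i}\tau^i_{(1\ldots n)}\circ\widetilde{\{\!\{\}\!\}}_Q\circ\tau^{-i}_{(1\ldots n)}$ with $\widetilde{\{\!\{a_1,\ldots,a_n\}\!\}}_Q=\delta_n(a_n)'\delta_1(a_1)''\otimes\delta_1(a_1)'\delta_2(a_2)''\otimes\cdots\otimes\delta_{n-1}(a_{n-1})'\delta_n(a_n)''$, extended linearly in $Q$. *)

(* Defs.v *)
From HB Require Import structures.
From mathcomp Require Import all_boot all_order all_algebra all_fingroup.
From Stdlib Require List.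
Set Implicit Arguments. Unset Strict Implicit. Unset Printing Implicit Defensive.
Import GRing.Theory.
Local Open Scope ring_scope.

Definition is_B_alg (k : fieldType) (A : algType k) (K : nat) (e : 'I_K -> A) : Prop :=
  (forall s t, e s * e t = if s == t then e s else 0) /\ \sum_(s < K) e s = 1.

Definition fin_gen (k : fieldType) (A : algType k) (K : nat) (e : 'I_K -> A) : Prop :=
  exists gens : seq A, forall P : A -> Prop,
    P 1 -> (forall s, P (e s)) -> (forall x, List.In x gens -> P x) ->
    (forall (c : k) x y, P x -> P y -> P (c *: x + y)) ->
    (forall x y, P x -> P y -> P (x * y)) -> forall a, P a.

(* ---------- Tensor product A (x)_k A ----------
   An element of A (x) A is represented by a finite list of simple tensors
   [(x_1,y_1);...] meaning sum_m x_m (x) y_m; two lists are equal in A (x) A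
   iff every k-bilinear map out of A x A takes the same value on them
   (universal property of the tensor product). *)
Definition tens2_eq (k : fieldType) (A : lmodType k) (s t : seq (A * A)) : Prop :=
  forall (V : lmodType k) (f : A -> A -> V),
    (forall (c : k) x x' y, f (c *: x + x') y = c *: f x y + f x' y) ->
    (forall (c : k) x y y', f x (c *: y + y') = c *: f x y + f x y') ->
    \sum_(p <- s) f p.1 p.2 = \sum_(p <- t) f p.1 p.2.

(* Double derivations: delta in D_{A/B} = Der_B(A, A (x) A) (outer structure),
   given by a representative  d : A -> seq (A * A)  of delta(a) = delta(a)' (x) delta(a)''. *)
Definition is_dder (k : fieldType) (A : algType k) (K : nat) (e : 'I_K -> A)
    (d : A -> seq (A * A)) : Prop :=
  [/\ forall (c : k) a b,
        tens2_eq (d (c *: a + b)) ([seq (c *: p.1, p.2) | p <- d a] ++ d b),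
      forall a b,
        tens2_eq (d (a * b))
          ([seq (p.1, p.2 * b) | p <- d a] ++ [seq (a * p.1, p.2) | p <- d b]) &
      forall s, tens2_eq (d (e s)) [::]].

(* the block idempotent (e_s)_{ij} (0-based indices) *)
Definition blockE (k : fieldType) (C : comAlgType k) (K : nat) (al : 'I_K -> nat)
    (N : nat) (s : 'I_K) : 'M[C]_N :=
  let off := (\sum_(t < K | (t < s)%N) al t)%N in
  \matrix_(i, j) (((i == j) && (off <= i)%N && (i < off + al s)%N)%:R : C).

(* rho : A -> M_N(C) is a B-algebra map, i.e. a point of Rep(A, alpha) over C *)
Definition is_rep (k : fieldType) (A : algType k) (K : nat) (e : 'I_K -> A)
    (al : 'I_K -> nat) (N : nat) (C : comAlgType k) (rho : A -> 'M[C]_N) : Prop :=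
  [/\ forall (c : k) a b, rho (c *: a + b) = (c%:A : C) *: rho a + rho b,
      forall a b, rho (a * b) = rho a *m rho b,
      rho 1 = 1%:M &
      forall s, rho (e s) = blockE C al N s].

Definition is_alg_morph (k : fieldType) (R C : comAlgType k) (phi : R -> C) : Prop :=
  [/\ forall (c : k) x y, phi (c *: x + y) = c *: phi x + phi y,
      forall x y, phi (x * y) = phi x * phi y & phi 1 = 1].

(* (R, rho) is O(Rep(A,alpha)) : the commutative k-algebra generated by the
   symbols a_{ij} = rho a i j subject to the stated relations, i.e. the
   universal commutative k-algebra carrying such a representation. *)
Definition is_coord_ring (k : fieldType) (A : algType k) (K : nat) (e : 'I_K -> A)
    (al : 'I_K -> nat) (N : nat) (R : comAlgType k) (rho : A -> 'M[R]_N) : Prop :=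
  is_rep e al rho /\
  forall (C : comAlgType k) (rho' : A -> 'M[C]_N), is_rep e al rho' ->
    (exists phi : R -> C, is_alg_morph phi /\ forall a i j, phi (rho a i j) = rho' a i j) /\
    (forall phi1 phi2 : R -> C, is_alg_morph phi1 -> is_alg_morph phi2 ->
       (forall a i j, phi1 (rho a i j) = rho' a i j) ->
       (forall a i j, phi2 (rho a i j) = rho' a i j) -> phi1 =1 phi2).

(* (d, i, j) stands for the derivation delta_{ij} of R *)
Definition dgen (A : Type) (N : nat) := ((A -> seq (A * A)) * 'I_N * 'I_N)%type.
(* (b, k, l) stands for the generator b_{kl} of R *)
Definition rgen (A : Type) (N : nat) := (A * 'I_N * 'I_N)%type.

(* delta_{ij}(b_{kl}) = delta(b)'_{kj} delta(b)''_{il} *)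
Definition dgen_ev (k : fieldType) (A : algType k) (N : nat) (R : comAlgType k)
    (rho : A -> 'M[R]_N) (x : dgen A N) (f : rgen A N) : R :=
  \sum_(p <- x.1.1 f.1.1) rho p.1 f.1.2 x.2 * rho p.2 x.1.2 f.2.

(* an element of wedge^*_R Der(R): formal R-linear combination of wedge words *)
Definition pv (A : Type) (N : nat) (R : Type) := seq (R * seq (dgen A N)).

Definition pv_wedge (k : fieldType) (A : Type) (N : nat) (R : comAlgType k)
    (P1 P2 : pv A N R) : pv A N R :=
  [seq (p.1 * q.1, p.2 ++ q.2) | p <- P1, q <- P2].

Definition pv_scale (k : fieldType) (A : Type) (N : nat) (R : comAlgType k)
    (r : R) (P : pv A N R) : pv A N R := [seq (r * p.1, p.2) | p <- P].

(* matrices with entries in wedge^*, multiplied with wedge *)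
Definition pv_mx (A : Type) (N : nat) (R : Type) := 'I_N -> 'I_N -> pv A N R.

Definition pv_mxmul (k : fieldType) (A : Type) (N : nat) (R : comAlgType k)
    (M1 M2 : pv_mx A N R) : pv_mx A N R :=
  fun i l => flatten [seq pv_wedge (M1 i j) (M2 j l) | j <- enum 'I_N].

Definition pv_mx1 (k : fieldType) (A : Type) (N : nat) (R : comAlgType k) : pv_mx A N R :=
  fun i j => if i == j then [:: (1, [::])] else [::].

Definition Xmat (k : fieldType) (A : Type) (N : nat) (R : comAlgType k)
    (d : A -> seq (A * A)) : pv_mx A N R :=
  fun i j => [:: (1, [:: (d, i, j)])].

Definition Xword (k : fieldType) (A : Type) (N : nat) (R : comAlgType k)
    (w : seq (A -> seq (A * A))) : pv_mx A N R :=
  foldr (fun d M => pv_mxmul (@Xmat k A N R d) M) (@pv_mx1 k A N R) w.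

(* Q = sum_q c_q (delta^q_1 ... delta^q_n), X extended linearly *)
Definition XQ (k : fieldType) (A : Type) (N : nat) (R : comAlgType k)
    (Q : seq (k * seq (A -> seq (A * A)))) : pv_mx A N R :=
  fun i j => flatten [seq pv_scale (q.1%:A) (@Xword k A N R q.2 i j) | q <- Q].

Definition pv_tr (A : Type) (N : nat) (R : Type) (M : pv_mx A N R) : pv A N R :=
  flatten [seq M i i | i <- enum 'I_N].

Definition pv_eval (k : fieldType) (A : algType k) (N : nat) (R : comAlgType k)
    (rho : A -> 'M[R]_N) (m : nat) (P : pv A N R) (fs : 'I_m.+1 -> rgen A N) : R :=
  \sum_(p <- P) p.1 * \sum_(s : 'S_m.+1) (-1) ^+ odd_perm s *
     \prod_(pr <- zip p.2 [seq fs (s q) | q <- enum 'I_m.+1]) dgen_ev rho pr.1 pr.2.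

Fixpoint cartprod (X : Type) (ls : seq (seq X)) : seq (seq X) :=
  match ls with
  | [::] => [:: [::]]
  | l :: ls' => [seq x :: c | x <- l, c <- cartprod ls']
  end.

Definition prevo (m : nat) (q : 'I_m.+1) : 'I_m.+1 := inord ((q + m) %% m.+1).

(* tilde bracket of the word w = delta_1...delta_n applied to x_1 (x) ... (x) x_n:
   component q is delta_{q-1}(x_{q-1})' delta_q(x_q)'' (indices cyclic). *)
Definition tbr (k : fieldType) (A : algType k) (m : nat) (w : seq (A -> seq (A * A)))
    (x : 'I_m.+1 -> A) : seq ('I_m.+1 -> A) :=
  [seq (fun q : 'I_m.+1 => (nth (0, 0) c (prevo q)).1 * (nth (0, 0) c q).2)
  | c <- cartprod [seq (nth (fun _ => [::]) w q) (x q) | q : 'I_m.+1 <- enum 'I_m.+1]].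

Definition rotT (A : Type) (m i : nat) (y : 'I_m.+1 -> A) : 'I_m.+1 -> A :=
  fun j => y (inord ((j + m.+1 - i %% m.+1) %% m.+1)).
Definition rotTinv (A : Type) (m i : nat) (x : 'I_m.+1 -> A) : 'I_m.+1 -> A :=
  fun j => x (inord ((j + i) %% m.+1)).

(* elements of A^{(x) n}: k-linear combinations of simple tensors *)
Definition bracket_w (k : fieldType) (A : algType k) (m : nat)
    (w : seq (A -> seq (A * A))) (x : 'I_m.+1 -> A) : seq (k * ('I_m.+1 -> A)) :=
  flatten [seq [seq ((-1) ^+ (m * i), rotT i y) | y <- tbr w (rotTinv i x)]
          | i <- iota 0 m.+1].

Definition bracket (k : fieldType) (A : algType k) (m : nat)
    (Q : seq (k * seq (A -> seq (A * A)))) (x : 'I_m.+1 -> A) : seq (k * ('I_m.+1 -> A)) :=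
  flatten [seq [seq (q.1 * t.1, t.2) | t <- bracket_w q.2 x] | q <- Q].

Definition tens_eval (k : fieldType) (A : algType k) (N : nat) (R : comAlgType k)
    (rho : A -> 'M[R]_N) (m : nat) (t : seq (k * ('I_m.+1 -> A)))
    (uu vv : 'I_m.+1 -> 'I_N) : R :=
  \sum_(p <- t) p.1 *: \prod_(q : 'I_m.+1) rho (p.2 q) (uu q) (vv q).

(* Main.v *)
Require Import Defs.
From HB Require Import structures.
From mathcomp Require Import all_boot all_order all_algebra all_fingroup.
From Stdlib Require List.
From Stdlib Require Import FunctionalExtensionality.
Import GRing.Theory.
Local Open Scope ring_scope.

Module P1.
Set Implicit Arguments. Unset Strict Implicit. Unset Printing Implicit Defensive.

Section Rot.
Variable m : nat.
Local Notation I := 'I_m.+1.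

Lemma rot_inj (i : I) : injective (fun r : I => r + i).
Proof. exact: (can_inj (addrK i)). Qed.

Definition rot (i : I) : 'S_m.+1 := perm (@rot_inj i).

Lemma rotE i r : rot i r = r + i.
Proof. by rewrite permE. Qed.

Definition rot1 : 'S_m.+1 := lift_perm ord_max ord0 1.

Lemma rot1_pow j (r : I) : val ((rot1 ^+ j)%g r) = ((r + j) %% m.+1)%N.
Proof.
elim: j => [|j IH]; first by rewrite expg0 perm1 addn0 modn_small.
rewrite expgSr permM.
case: (unliftP ord_max ((rot1 ^+ j)%g r)) => [k|] Hk.
  rewrite Hk /rot1 lift_perm_lift perm1 /=.
  move: IH; rewrite Hk /= /bump.
  have hk : (m <= k)%N = false by rewrite leqNgt ltn_ord.
  rewrite hk add0n => IH.
  rewrite add1n addnS -[(r + j).+1]addn1 -modnDml -IH modn_small //.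
    by rewrite addn1.
  by rewrite addn1 ltnS; have := ltn_ord k.
rewrite Hk /rot1 lift_perm_id /=.
move: IH; rewrite Hk /= => IH.
by rewrite addnS -addn1 -modnDml -IH addn1 modnn.
Qed.

Lemma rot_pow (i : I) : rot i = (rot1 ^+ i)%g.
Proof. by apply/permP => r; apply/val_inj; rewrite rot1_pow rotE. Qed.

Lemma odd_rot1 : odd_perm rot1 = odd m.
Proof. by rewrite /rot1 odd_lift_perm /= odd_perm1 addbF addbF. Qed.

Lemma odd_rot (i : I) : odd_perm (rot i) = odd (m * i).
Proof.
rewrite rot_pow; elim: (nat_of_ord i) => [|j IH]; first by rewrite expg0 odd_perm1 muln0.
by rewrite expgSr odd_permM IH odd_rot1 mulnS oddD addbC.
Qed.

Lemma perm_split (R : nzRingType) (F : 'S_m.+1 -> R) :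
  \sum_(s : 'S_m.+1) (-1) ^+ odd_perm s * F s =
  \sum_(s : 'S_m.+1 | s ord0 == ord0) (-1) ^+ odd_perm s *
     \sum_(i : I) (-1) ^+ (m * i) * F (rot i * s)%g.
Proof.
under [RHS]eq_bigr => s _ do rewrite mulr_sumr.
rewrite exchange_big /=.
have H : forall i : I, \sum_(s : 'S_m.+1 | s ord0 == ord0)
   (-1) ^+ odd_perm s * ((-1) ^+ (m * i) * F (rot i * s)%g) =
   \sum_(s : 'S_m.+1 | s (- i) == ord0) (-1) ^+ odd_perm s * F s.
  move=> i.
  rewrite [RHS](reindex_inj (mulgI (rot i))) /=.
  apply: eq_big => s.
    by rewrite permM rotE addNr.
  by move=> _; rewrite mulrA odd_permM odd_rot signr_addb signr_odd -!exprD addnC.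

under [RHS]eq_bigr => i _ do rewrite H.
under [RHS]eq_bigr => i _ do rewrite big_mkcond /=.
rewrite [RHS]exchange_big /=; apply: eq_bigr => s _.
rewrite (bigD1 (- (s^-1)%g ord0)) //= opprK permKV eqxx big1 ?addr0 //.
move=> i Hi; case: ifP => // /eqP Hs.
case/eqP: Hi; apply: oppr_inj; rewrite opprK.
by rewrite -Hs permK.
Qed.
End Rot.

End P1.
Import P1.

Module Aux.
Set Implicit Arguments. Unset Strict Implicit. Unset Printing Implicit Defensive.

Section Core.
Variables (k : fieldType) (A : algType k) (N : nat) (R : comAlgType k)
  (rho : A -> 'M[R]_N).

Definition Ev (P : pv A N R) (g : seq (rgen A N)) : R :=
  \sum_(p <- P) p.1 * \prod_(pr <- zip p.2 g) dgen_ev rho pr.1 pr.2.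

Definition Mdg (d : A -> seq (A * A)) (f : rgen A N) : 'M[R]_N :=
  \matrix_(i, j) dgen_ev rho (d, i, j) f.

Lemma Ev_Xword (w : seq (A -> seq (A * A))) (g : seq (rgen A N)) :
  size w = size g -> forall i l,
  Ev (@Xword k A N R w i l) g =
  (foldr (@mulmx R N N N) 1%:M [seq Mdg pr.1 pr.2 | pr <- zip w g]) i l.
Proof.
elim: w g => [|d w IH] [|g0 g] //= Hs i l.
  rewrite /Ev /pv_mx1 mxE; case: eqP => _ /=.
    by rewrite big_cons big_nil big_nil mulr1 addr0.
  by rewrite big_nil.
case: Hs => Hs.
rewrite mxE /Ev /pv_mxmul big_flatten big_map big_enum /=.
apply: eq_bigr => j _.
rewrite -IH // /Ev /pv_wedge /Xmat /= cats0 big_map mxE mulr_sumr.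
apply: eq_bigr => p _ /=.
by rewrite mul1r big_cons /= mulrCA.
Qed.
End Core.


Section Gen.
Variables (R : comNzRingType) (N : nat).

Lemma chain (z : 'rV[R]_N * 'cV[R]_N) zs :
  foldr (@mulmx R N N N) 1%:M [seq p.2 *m p.1 | p <- z :: zs] =
  (\prod_(pr <- zip (z :: zs) zs) (pr.1.1 *m pr.2.2) 0 0) *: (z.2 *m (last z zs).1).
Proof.
elim: zs z => [|z' zs IH] z.
  by rewrite /= big_nil scale1r mulmx1.
transitivity ((z.2 *m z.1) *m foldr (@mulmx R N N N) 1%:M [seq p.2 *m p.1 | p <- z' :: zs]); first by [].
rewrite IH big_cons /= -scalemxAr -!mulmxA (mulmxA z.1) (mx11_scalar (z.1 *m z'.2)).
rewrite mul_scalar_mx -scalemxAr scalerA mulrC; congr (_ *: _).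
congr (_ * _); by rewrite -mx11_scalar.
Qed.

Lemma tr_chain (z : 'rV[R]_N * 'cV[R]_N) zs :
  \tr (foldr (@mulmx R N N N) 1%:M [seq p.2 *m p.1 | p <- z :: zs]) =
  (\prod_(pr <- zip (z :: zs) zs) (pr.1.1 *m pr.2.2) 0 0) * ((last z zs).1 *m z.2) 0 0.
Proof.
rewrite chain mxtraceZ mxtrace_mulC; congr (_ * _).
by rewrite /mxtrace big_ord1.
Qed.

Lemma sum_cartprod (T : Type) (Ls : seq (seq T)) (Fs : seq (T -> 'M[R]_N)) :
  size Ls = size Fs ->
  \sum_(c <- cartprod Ls) foldr (@mulmx R N N N) 1%:M [seq pr.2 pr.1 | pr <- zip c Fs] =
  foldr (@mulmx R N N N) 1%:M [seq \sum_(p <- pr.1) pr.2 p | pr <- zip Ls Fs].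
Proof.
elim: Ls Fs => [|L Ls IH] [|F Fs] //= Hs.
  by rewrite big_cons big_nil addr0.
case: Hs => Hs.
rewrite big_allpairs_dep /= mulmx_suml; apply: eq_bigr => x _.
by rewrite -IH // mulmx_sumr.
Qed.

Lemma zip_enum (n : nat) (T1 T2 : Type) (x0 : T1) (s : seq T1) (g : 'I_n -> T2) :
  size s = n ->
  zip s [seq g q | q <- enum 'I_n] = [seq (nth x0 s q, g q) | q : 'I_n <- enum 'I_n].
Proof.
move=> Hs.
have E : s = [seq nth x0 s q | q : 'I_n <- enum 'I_n].
  rewrite -[LHS](mkseq_nth x0) Hs /mkseq -val_enum_ord -map_comp.
  by apply: eq_map.
by rewrite {1}E zip_map.
Qed.
End Gen.


Lemma size_cartprod (T : eqType) (Ls : seq (seq T)) c :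
  c \in cartprod Ls -> size c = size Ls.
Proof.
elim: Ls c => [|L Ls IH] c /=; first by rewrite inE => /eqP ->.
by case/allpairsPdep => x [y [_ Hy ->]] /=; rewrite (IH _ Hy).
Qed.

Lemma val_prevo m (q : 'I_m.+1) : nat_of_ord (prevo q) = ((q + m) %% m.+1)%N.
Proof. by rewrite /prevo inordK // ltn_pmod. Qed.

Lemma zip_shift (T : Type) (h : nat -> T) m j :
  zip (h j :: map h (iota j.+1 m)) (map h (iota j.+1 m)) =
  [seq (h i, h i.+1) | i <- iota j m].
Proof. by elim: m j => [|m IH] j //=; rewrite IH. Qed.

Lemma last_shift (T : Type) (h : nat -> T) m j :
  last (h j) (map h (iota j.+1 m)) = h (j + m)%N.
Proof. by elim: m j => [|m IH] j /=; [rewrite addn0 | rewrite IH addnS]. Qed.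

Lemma cyc_prod (T : Type) (R : comNzRingType) (G : T -> T -> R) m (f : 'I_m.+1 -> T) :
  \prod_(r : 'I_m.+1) G (f (prevo r)) (f r) =
  \prod_(pr <- zip (map f (enum 'I_m.+1)) (behead (map f (enum 'I_m.+1))))
      G pr.1 pr.2 *
  G (last (f ord0) (behead (map f (enum 'I_m.+1)))) (f ord0).
Proof.
pose h i := f (inord i).
have Ef : forall q : 'I_m.+1, f q = h q by move=> q; rewrite /h inord_val.
have -> : map f (enum 'I_m.+1) = map h (iota 0 m.+1).
  by rewrite -val_enum_ord -map_comp; apply: eq_map => q /=; rewrite Ef.
rewrite /= zip_shift (Ef ord0) /= last_shift add0n big_map.
rewrite big_ord_recl mulrC; congr (_ * _).
  transitivity (\prod_(0 <= j < m) G (h j) (h j.+1)); last by rewrite /index_iota subn0.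
  rewrite big_mkord; apply: eq_bigr => i _.
  rewrite !Ef; congr (G (h _) (h _)).
  rewrite val_prevo /= /bump leq0n add1n addSnnS modnDr modn_small //.
  by have := ltn_ord i; rewrite ltnS => /ltnW.
rewrite !Ef val_prevo /= add0n modn_small //.
Qed.


Section Core2.
Variables (k : fieldType) (A : algType k) (N : nat) (R : comAlgType k)
  (rho : A -> 'M[R]_N).
Hypothesis rhoM : forall a b, rho (a * b) = rho a *m rho b.

Definition Xm (p : A * A) (kk ll : 'I_N) : 'M[R]_N :=
  col ll (rho p.2) *m row kk (rho p.1).

Lemma Mdg_sum d b kk ll :
  Mdg rho d (b, kk, ll) = \sum_(p <- d b) Xm p kk ll.
Proof.
apply/matrixP => i j; rewrite !mxE summxE; apply: eq_bigr => p _.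
by rewrite !mxE big_ord1 !mxE mulrC.
Qed.

Variable m : nat.
Local Notation I := 'I_m.+1.

Definition Tgt (w : seq (A -> seq (A * A))) (b : I -> A) (uu vv : I -> 'I_N) : R :=
  \tr (foldr (@mulmx R N N N) 1%:M
    [seq \sum_(p <- nth (fun _ => [::]) w q (b q)) Xm p (uu q) (vv q) | q : I <- enum I]).

Lemma coreL w b uu vv : size w = m.+1 ->
  \sum_(i < N) Ev rho (@Xword k A N R w i i) [seq (b q, uu q, vv q) | q <- enum I]
  = Tgt w b uu vv.
Proof.
move=> Hs.
have E := @Ev_Xword k A N R rho w [seq (b q, uu q, vv q) | q <- enum I].
rewrite size_map size_enum_ord in E.
under eq_bigr => i _ do rewrite (E Hs).
rewrite -/(mxtrace _).
rewrite /Tgt (zip_enum (fun _ => [::])) // -map_comp.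
by congr (\tr (foldr _ _ _)); apply: eq_map => q /=; rewrite Mdg_sum.
Qed.

Lemma coreR w b uu vv :
  \sum_(y <- tbr w b) \prod_(r : I) rho (y r) (uu (prevo r)) (vv r) = Tgt w b uu vv.
Proof.
pose Ls := [seq nth (fun _ => [::]) w q (b q) | q : I <- enum I].
pose Fs := [seq (fun p => Xm p (uu q) (vv q)) | q : I <- enum I].
have -> : Tgt w b uu vv =
   \tr (foldr (@mulmx R N N N) 1%:M [seq \sum_(p <- pr.1) pr.2 p | pr <- zip Ls Fs]).
  rewrite /Tgt /Ls /Fs zip_map -[in RHS]map_comp.
  by congr (\tr (foldr _ _ _)); apply: eq_map.
rewrite -sum_cartprod ?size_map // raddf_sum /tbr big_map.
rewrite -/Ls big_seq [RHS]big_seq; apply: eq_bigr => c Hc.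
have Hsz : size c = m.+1 by rewrite (size_cartprod Hc) size_map size_enum_ord.
rewrite /Fs (zip_enum (0, 0)) // -map_comp.
pose f := fun q : I => (row (uu q) (rho (nth (0, 0) c q).1), col (vv q) (rho (nth (0, 0) c q).2)).
have -> : [seq ((fun pr : (A * A) * (A * A -> 'M[R]_N) => pr.2 pr.1)
              \o (fun q : I => (nth (0, 0) c q, fun p => Xm p (uu q) (vv q)))) q | q <- enum I]
        = [seq p.2 *m p.1 | p <- map f (enum I)].
  by rewrite -[in RHS]map_comp; apply: eq_map.
have -> : map f (enum I) = f ord0 :: behead (map f (enum I)).
  by rewrite enum_ordSl.
transitivity (\tr (foldr (@mulmx R N N N) 1%:M [seq p.2 *m p.1 | p <- f ord0 :: behead [seq f i | i <- enum I]])); last by [].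
rewrite tr_chain.
have -> : f ord0 :: behead (map f (enum I)) = map f (enum I) by rewrite enum_ordSl.
rewrite -(cyc_prod (fun x y : 'rV[R]_N * 'cV[R]_N => (x.1 *m y.2) 0 0)).
apply: eq_bigr => r _.
by rewrite /f /= rhoM !mxE; apply: eq_bigr => j _; rewrite !mxE.
Qed.
End Core2.


Lemma eq_big_In (T : Type) (V : nmodType) (s : seq T) (F1 F2 : T -> V) :
  (forall x, List.In x s -> F1 x = F2 x) ->
  \sum_(x <- s) F1 x = \sum_(x <- s) F2 x.
Proof.
elim: s => [|x s IH] H; first by rewrite !big_nil.
rewrite !big_cons H /=; last by left.
by rewrite IH // => y Hy; apply: H; right.
Qed.

Lemma prevo_add m (r i : 'I_m.+1) : prevo (r + i) = prevo r + i.
Proof.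
apply/val_inj; rewrite /= !val_prevo /=.
by rewrite modnDml modnDml addnAC.
Qed.

Lemma rotTinvE (T : Type) m (i : 'I_m.+1) (x : 'I_m.+1 -> T) :
  rotTinv i x = fun j => x (j + i).
Proof.
apply: functional_extensionality => j; rewrite /rotTinv; congr x.
by apply/val_inj; rewrite /= inordK // ltn_pmod.
Qed.

Lemma rotTE (T : Type) m (i : 'I_m.+1) (y : 'I_m.+1 -> T) r :
  rotT i y (r + i) = y r.
Proof.
rewrite /rotT; congr y; apply/val_inj.
rewrite /= inordK ?ltn_pmod // (modn_small (ltn_ord i)).
rewrite -addnBA; last exact: ltnW.
rewrite modnDml -addnA subnKC; last exact: ltnW.
by rewrite modnDr modn_small.
Qed.

End Aux.
Import Aux.

Theorem lemma5p2 (k : fieldType) (A : algType k) (K : nat) (e : 'I_K -> A)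
    (al : 'I_K -> nat) (N : nat) (R : comAlgType k) (rho : A -> 'M[R]_N)
    (m : nat) (Q : seq (k * seq (A -> seq (A * A))))
    (a : 'I_m.+1 -> A) (u v : 'I_m.+1 -> 'I_N) :
  [pchar k] =i pred0 ->
  @is_B_alg k A K e -> @fin_gen k A K e ->
  N = (\sum_(s < K) al s)%N ->
  @is_coord_ring k A K e al N R rho ->
  (forall q, List.In q Q ->
     size q.2 = m.+1 /\ forall d, List.In d q.2 -> @is_dder k A K e d) ->
  @pv_eval k A N R rho m (pv_tr (@XQ k A N R Q)) (fun q => (a q, u q, v q)) =
  \sum_(s : 'S_m.+1 | s ord0 == ord0)
     (-1) ^+ odd_perm s *
     @tens_eval k A N R rho m (@bracket k A m Q (fun q => a (s q)))
       (fun q => u (s (prevo q))) (fun q => v (s q)).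
Proof.
move=> _ _ _ _ [[_ rhoM _ _] _] HQ.
pose F (s : 'S_m.+1) := \sum_(q <- Q) q.1%:A *
   Tgt rho q.2 (fun x => a (s x)) (fun x => u (s x)) (fun x => v (s x)).
transitivity (\sum_(s : 'S_m.+1) (-1) ^+ odd_perm s * F s).
  rewrite /pv_eval.
  under eq_bigr => p _ do rewrite mulr_sumr.
  rewrite exchange_big /=; apply: eq_bigr => s _.
  rewrite /F mulr_sumr /pv_tr big_flatten big_map big_enum /=.
  under eq_bigr => i _ do rewrite /XQ big_flatten big_map.
  rewrite exchange_big /=.
  apply: eq_big_In => q Hq.
  rewrite -coreL ?(proj1 (HQ q Hq)) // /Ev !mulr_sumr.
  apply: eq_bigr => i _; rewrite /pv_scale big_map mulr_sumr mulr_sumr.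
  apply: eq_bigr => p _ /=.
  by rewrite mulrCA !mulrA.
rewrite perm_split; apply: eq_bigr => s _; congr (_ * _).
rewrite /tens_eval /bracket big_flatten big_map /F /=.
under eq_bigr => i _ do rewrite mulr_sumr.
rewrite exchange_big /=; apply: eq_bigr => q _.
rewrite big_map /bracket_w big_flatten big_map.
rewrite (_ : iota 0 m.+1 = index_iota 0 m.+1); last by rewrite /index_iota subn0.
rewrite big_mkord; apply: eq_bigr => i _.
rewrite big_map /= -scaler_sumr rotTinvE.
have -> : (fun j : 'I_m.+1 => a (s (j + i))) = (fun x => a ((P1.rot i * s)%g x)).
  by apply: functional_extensionality => x; rewrite permM P1.rotE.
rewrite -(coreR rhoM).
have Hp : forall y : 'I_m.+1 -> A,
  \prod_(j < m.+1) rho (rotT i y j) (u (s (prevo j))) (v (s j)) =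
  \prod_(r < m.+1) rho (y r) (u ((P1.rot i * s)%g (prevo r))) (v ((P1.rot i * s)%g r)).
  move=> y; rewrite (reindex_inj (@P1.rot_inj m i)) /=.
  by apply: eq_bigr => r _; rewrite rotTE prevo_add !permM !P1.rotE.
under [in RHS]eq_bigr => y _ do rewrite Hp.
rewrite mulr_algl [in RHS]mulrC -scalerA.
move: (q.1 *: _) => Y; rewrite -[in LHS]signr_odd -[in RHS]signr_odd.
by case: (odd _) => /=; rewrite ?expr1 ?expr0 ?mulN1r ?scaleN1r ?mul1r ?scale1r.
Qed.
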